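(* For every finite simple graph $\Gamma$ on vertex set $V$, $F(P_{B(\Gamma)})=F_\Gamma$. Consequently $F_\Gamma=\sum_{\alpha\models |V|}\zeta_\alpha(\Gamma)M_\alpha$, where $\zeta_\alpha(\Gamma)$ is the number of ordered colorings $\lambda:V\to\{1,\dots,k(\alpha)\}$ that are surjective and have type $\alpha$.
   Context: For a finite simple graph $\Gamma$ on $V$, $B(\Gamma)$ is the collection of nonempty $I\subseteq V$ such that the induced subgraph $\Gamma|_I$ is connected; $P_{B(\Gamma)}=\sum_{I\in B(\Gamma)}\mathrm{Conv}\{e_i:i\in I\}\subset\mathbb{R}^V$ (the graph-associahedron). For a convex polytope $Q\subset\mathbb{R}^V$, $f:V\to\mathbb{N}=\{1,2,\dots\}$ is $Q$-generic if $x\mapsto\sum_v f(v)x_v$ attains its maximum over $Q$ at a unique point, and $F(Q)=\sum_{f\ Q\text{-generic}}\prod_{v}x_{f(v)}$. For a composition $\alpha=(a_1,\dots,a_k)$ of length $k(\alpha)=k$, $M_\alpha=\sum_{i_1<\dots<i_k}x_{i_1}^{a_1}\cdots x_{i_k}^{a_k}$. A coloring is a map $\lambda:V\to\mathbb{N}$; let $i_1<\dots<i_k$ be its values and $I_j=\lambda^{-1}(\{i_1,\dots,i_j\})$, $I_0=\emptyset$. It is ordered if for each $j$, no two distinct vertices $u,w$ with $\lambda(u)=\lambda(w)=i_j$ are joined by a path in $\Gamma$ (possibly a single edge) all of whose internal vertices lie in $I_{j-1}$. Its type is $(|\lambda^{-1}(i_1)|,\dots,|\lambda^{-1}(i_k)|)$.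 $F_\Gamma=\sum_{\lambda\text{ ordered}}\prod_{v\in V}x_{\lambda(v)}$; for the empty graph $F_\Gamma=1$. *)

(* Defs.v *)
From HB Require Import structures.
From mathcomp Require Import all_boot all_order all_algebra.
From Stdlib Require Import ClassicalEpsilon.
Set Implicit Arguments. Unset Strict Implicit. Unset Printing Implicit Defensive.
Import Order.TTheory GRing.Theory Num.Theory.

Definition asb (P : Prop) : bool :=
  if excluded_middle_informative P then true else false.

(* A finite simple graph on V is a symmetric irreflexive relation on V. *)

(* Gamma|_I is connected (I nonempty checked separately). *)
Definition induced_connected (V : finType) (G : rel V) (I : {set V}) : bool :=
  [forall x in I, forall y in I,
     connect [rel a b | [&& a \in I, b \in I & G a b]] x y].

Definition building_set (V : finType) (G : rel V) : {set {set V}} :=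
  [set I : {set V} | (I != set0) && induced_connected G I].

Local Open Scope ring_scope.

Definition evec (R : realFieldType) (V : finType) (i : V) : {ffun V -> R} :=
  [ffun j => if j == i then 1 else 0].

Definition conv_simplex (R : realFieldType) (V : finType) (I : {set V})
    (x : {ffun V -> R}) : Prop :=
  exists t : V -> R,
    (forall i, i \in I -> 0 <= t i) /\ \sum_(i in I) t i = 1 /\
    (forall j, x j = \sum_(i in I) t i * evec R i j).

Definition minkowski_sum (R : realFieldType) (V : finType) (B : {set {set V}})
    (Q : {set V} -> {ffun V -> R} -> Prop) (x : {ffun V -> R}) : Prop :=
  exists y : {set V} -> {ffun V -> R},
    (forall I, I \in B -> Q I (y I)) /\ (forall j, x j = \sum_(I in B) y I j).

Definition graph_associahedron (R : realFieldType) (V : finType) (G : rel V)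
    : {ffun V -> R} -> Prop :=
  minkowski_sum (building_set G) (@conv_simplex R V).

Definition generic (R : realFieldType) (V : finType) (Q : {ffun V -> R} -> Prop)
    (f : V -> nat) : Prop :=
  let phi := fun x : {ffun V -> R} => \sum_v (f v)%:R * x v in
  exists x, Q x /\ (forall y, Q y -> phi y <= phi x) /\
            (forall y, Q y -> phi y = phi x -> y = x).

Local Close Scope ring_scope.

Definition content (V : finType) (n : nat) (g : {ffun V -> 'I_n})
    : {ffun 'I_n -> nat} := [ffun i => #|[set v | g v == i]|].

(* qs_coef P n e = coefficient of the monomial x_1^(e 0) ... x_n^(e (n-1)) in
   the series  sum_{f : V -> {1,2,...}, P f} prod_v x_(f v).
   (A function f contributes to such a monomial iff it takes values in
   {1..n}; we encode f v = (g v).+1 with g : V -> 'I_n.)  Two such series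
   are equal iff qs_coef agrees for all n and e. *)
Definition qs_coef (V : finType) (P : (V -> nat) -> Prop) (n : nat)
    (e : {ffun 'I_n -> nat}) : nat :=
  #|[set g : {ffun V -> 'I_n} | asb (P (fun v => (g v).+1)) && (content g == e)]|.

Definition ordered_coloring (V : finType) (G : rel V) (l : V -> nat) : Prop :=
  forall u w : V, u != w -> l u = l w ->
    ~ (exists p : seq V,
         [&& path G u (rcons p w), uniq (u :: rcons p w) &
             all (fun x => l x < l u) p]).

Definition coloring_values (V : finType) (l : V -> nat) : seq nat :=
  sort leq (undup [seq l v | v <- enum V]).

Definition coloring_type (V : finType) (l : V -> nat) : seq nat :=
  [seq #|[set v | l v == c]| | c <- coloring_values l].

Definition zeta (V : finType) (G : rel V) (alpha : seq nat) : nat :=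
  #|[set l : {ffun V -> 'I_(size alpha)} |
      [&& asb (ordered_coloring G (fun v => (l v).+1)),
          [forall j : 'I_(size alpha), [exists v, l v == j]] &
          coloring_type (fun v => (l v).+1) == alpha]]|.

Definition F_graph_coef (V : finType) (G : rel V) (n : nat)
    (e : {ffun 'I_n -> nat}) : nat :=
  @qs_coef V (ordered_coloring G) n e.

Definition F_poly_coef (R : realFieldType) (V : finType)
    (Q : {ffun V -> R} -> Prop) (n : nat) (e : {ffun 'I_n -> nat}) : nat :=
  @qs_coef V (generic Q) n e.

(* coefficient of x_1^(e 0)...x_n^(e (n-1)) in the monomial quasisymmetric
   function M_alpha (alpha a composition, all parts positive) *)
Definition M_coef (alpha : seq nat) (n : nat) (e : {ffun 'I_n -> nat}) : nat :=
  if [seq e i | i <- enum 'I_n & e i != 0] == alpha then 1 else 0.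

Definition is_composition (m : nat) (alpha : seq nat) : bool :=
  all (fun a => 0 < a) alpha && (sumn alpha == m).

(* sum_{alpha |= m} F alpha : every composition of m has length k <= m and
   parts <= m, so it is (map val a) for a unique k < m.+1 and
   a : k.-tuple 'I_m.+1 *)
Definition sum_compositions (m : nat) (F : seq nat -> nat) : nat :=
  \sum_(k < m.+1) \sum_(a : k.-tuple 'I_m.+1 | is_composition m (map val a))
     F (map val a).

(* Main.v *)
Require Import Defs.
From HB Require Import structures.
From mathcomp Require Import all_boot all_order all_algebra.
From Stdlib Require Import ClassicalEpsilon.
Set Implicit Arguments. Unset Strict Implicit. Unset Printing Implicit Defensive.
Lemma asbP (P : Prop) : reflect P (asb P).
Proof. rewrite /asb; case: excluded_middle_informative => H; constructor; exact H. Qed.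

Lemma asb_iff (P Q : Prop) : (P <-> Q) -> asb P = asb Q.
Proof. by move=> [PQ QP]; apply/asbP/asbP. Qed.
Section Part2.
Variables (V : finType) (G : rel V).

Lemma ordered_mono (f h : V -> nat) : (forall u w, (f u < f w) = (h u < h w))%N ->
  ordered_coloring G f -> ordered_coloring G h.
Proof.
move=> Hm Hf u w uw huw [p /and3P[Hp Hu Hall]]; apply: (Hf u w uw).
  case: (ltngtP (f u) (f w)) => // H.
    by move: H; rewrite Hm huw ltnn.
  by move: H; rewrite Hm huw ltnn.
exists p; rewrite Hp Hu /=; apply: sub_all Hall => x /=; by rewrite Hm.
Qed.
Lemma sum_classes k (l : V -> 'I_k) : (\sum_(j < k) #|[set v | l v == j]|)%N = #|V|.
Proof.
transitivity (\sum_(j < k) \sum_v ((l v == j) : nat))%N.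
  apply: eq_bigr => j _; rewrite -sum1_card big_mkcond /=; apply: eq_bigr => v _.
  by rewrite inE; case: eqP.
rewrite exchange_big /= -sum1_card; apply: eq_bigr => v _.
by rewrite (bigD1 (l v)) //= eqxx big1 // => j; rewrite eq_sym => /negbTE ->.
Qed.


Lemma card_bij n k (e : {ffun 'I_n -> nat}) (sel : 'I_k -> 'I_n) :
  (forall j j', (sel j < sel j') = (j < j'))%N ->
  (forall i, (e i != 0%N) = (i \in codom sel)) ->
  #|[set g : {ffun V -> 'I_n} | asb (ordered_coloring G (fun v => (g v).+1)) && (content g == e)]| =
  #|[set l : {ffun V -> 'I_k} | [&& asb (ordered_coloring G (fun v => (l v).+1)),
       [forall j, [exists v, l v == j]] & [forall j, #|[set v | l v == j]| == e (sel j)]]]|.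
Proof.
move=> Hmono Hsupp.
have selI : injective sel.
  move=> j j' Hj; apply/val_inj/eqP; case: (ltngtP j j') => // H.
    by move: H; rewrite -Hmono Hj ltnn.
  by move: H; rewrite -Hmono Hj ltnn.
pose Psi (l : {ffun V -> 'I_k}) : {ffun V -> 'I_n} := [ffun v => sel (l v)].
have PsiI : injective Psi.
  move=> l1 l2 H; apply/ffunP => v; apply: selI.
  by have := congr1 (fun g : {ffun V -> 'I_n} => g v) H; rewrite !ffunE.
rewrite -[RHS](card_imset _ PsiI); apply: eq_card => g.
apply/idP/imsetP.
- rewrite inE => /andP[/asbP Hord /eqP Hc].
  have Hg : forall v, exists j, g v = sel j.
    move=> v; apply/codomP; rewrite -Hsupp -Hc ffunE -lt0n card_gt0.
    by apply/set0Pn; exists v; rewrite inE.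
  have [l0 Hl0] := fin_all_exists Hg.
  exists [ffun v => l0 v]; last by apply/ffunP => v; rewrite !ffunE.
  rewrite inE; apply/and3P; split.
  + apply/asbP; apply: ordered_mono Hord => u w.
    by rewrite !ffunE !ltnS !Hl0 Hmono.
  + apply/forallP => j; have : e (sel j) != 0%N by rewrite Hsupp codom_f.
    rewrite -Hc ffunE -lt0n card_gt0 => /set0Pn [v]; rewrite inE Hl0 => /eqP/selI Hv.
    by apply/existsP; exists v; rewrite ffunE Hv.
  + apply/forallP => j; rewrite -Hc ffunE; apply/eqP; apply: eq_card => v.
    by rewrite !inE ffunE Hl0 (inj_eq selI).
- case=> l; rewrite inE => /and3P[/asbP Hord _ /forallP Hcnt] ->.
  rewrite inE; apply/andP; split.
  + apply/asbP; apply: ordered_mono Hord => u w.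
    by rewrite !ffunE !ltnS Hmono.
  + apply/eqP/ffunP => i; rewrite !ffunE.
    case: (boolP (i \in codom sel)) => [/codomP [j ->]|ni].
    * rewrite -(eqP (Hcnt j)); apply: eq_card => v.
      by rewrite !inE ffunE (inj_eq selI).
    * have -> : e i = 0%N by apply/eqP; rewrite -[_ == _]negbK Hsupp ni.
      apply/eqP; rewrite cards_eq0; apply/eqP/setP => v; rewrite !inE ffunE.
      by apply/negbTE; apply: contra ni => /eqP <-; exact: codom_f.
Qed.

Lemma ctype_surj k (l : {ffun V -> 'I_k}) : [forall j, [exists v, l v == j]] ->
  coloring_type (fun v => (l v).+1) = [seq #|[set v | l v == j]| | j <- enum 'I_k].
Proof.
move=> /forallP Hs.
have Hv : coloring_values (fun v => (l v).+1) = [seq (val j).+1 | j <- enum 'I_k].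
  apply: (sorted_eq leq_trans anti_leq).
  - rewrite /coloring_values; apply: (@sort_sorted nat leq) => a b; exact: leq_total.
  - have -> : [seq (val j).+1 | j <- enum 'I_k] = iota 1 k.
      by rewrite (map_comp succn val) val_enum_ord -(iotaDl 1 0).
    exact: iota_sorted.
  - apply: uniq_perm.
    + by rewrite sort_uniq undup_uniq.
    + rewrite map_inj_uniq ?enum_uniq // => a b /eqP; rewrite eqSS => /eqP.
      exact: val_inj.
    + move=> x; rewrite mem_sort mem_undup.
      apply/mapP/mapP => [[v _ ->]|[j _ ->]].
        by exists (l v) => //; rewrite mem_enum.
      have /existsP [v /eqP lv] := Hs j.
      by exists v; rewrite ?mem_enum // lv.
rewrite /coloring_type Hv -map_comp; apply: eq_map => j /=.
by apply: eq_card => v; rewrite !inE eqSS.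
Qed.

Definition alpha_of n (e : {ffun 'I_n -> nat}) := [seq e i | i <- enum 'I_n & e i != 0%N].

Lemma sel_exists n (e : {ffun 'I_n -> nat}) :
  exists sel : ('I_(size (alpha_of e)) -> 'I_n),
    [/\ (forall j j', (sel j < sel j') = (j < j'))%N,
        (forall i, (e i != 0%N) = (i \in codom sel)) &
        [seq e (sel j) | j <- enum 'I_(size (alpha_of e))] = alpha_of e].
Proof.
rewrite /alpha_of.
set S := [seq i <- enum 'I_n | e i != 0%N].
have E : size [seq e i | i <- S] = size S by rewrite size_map.
rewrite E.
have Ssort : sorted (relpre val ltn) S.
  apply: sorted_filter; first by move=> a b c /=; apply: ltn_trans.
  by rewrite -sorted_map val_enum_ord iota_ltn_sorted.
have hom : forall j j' : 'I_(size S), (j < j')%N -> (tnth (in_tuple S) j < tnth (in_tuple S) j')%N.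
  move=> j j' H; have x0 : 'I_n := tnth (in_tuple S) j.
  rewrite !(tnth_nth x0).
  have Htr : transitive (relpre (@nat_of_ord n) ltn).
    by move=> b a c; apply: ltn_trans.
  by apply: (sorted_ltn_nth Htr x0 Ssort); rewrite ?inE ?size_tuple ?ltn_ord.
exists (tnth (in_tuple S)); split.
- move=> j j'; case: (ltngtP j j') => H.
  + by rewrite hom.
  + by apply/negbTE; rewrite -leqNgt ltnW // hom.
  + by rewrite (ord_inj H) ltnn.
- move=> i; have -> : (i \in codom (tnth (in_tuple S))) = (i \in S).
    by apply/codomP/(tnthP (in_tuple S)) => [[j ->]|[j ->]]; exists j.
  by rewrite mem_filter mem_enum andbT.
- by rewrite (map_comp e) map_tnth_enum.
Qed.

Lemma zeta_eq n (e : {ffun 'I_n -> nat}) :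
  #|[set g : {ffun V -> 'I_n} | asb (ordered_coloring G (fun v => (g v).+1)) && (content g == e)]|
  = zeta G (alpha_of e).
Proof.
have [sel [Hm Hs Ha]] := sel_exists e.
rewrite (card_bij Hm Hs) /zeta; apply: eq_card => l; rewrite !inE.
case: (asb _) => //=.
case Hsurj: [forall j, [exists v, l v == j]] => //=.
rewrite ctype_surj // -[X in _ == X]Ha.
apply/forallP/eqP => [H | /eq_in_map H j].
- by apply/eq_in_map => j _; apply/eqP/H.
- by apply/eqP; apply: H; rewrite mem_enum.
Qed.

Lemma zeta0 (a : seq nat) : sumn a != #|V| -> zeta G a = 0%N.
Proof.
move=> Hs; apply/eqP; rewrite cards_eq0; apply/eqP/setP => l; rewrite !inE.
apply/negbTE/negP => /and3P[_ Hsurj /eqP Ht].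
move: Hs; rewrite -Ht ctype_surj // sumnE big_map big_enum /= sum_classes.
by rewrite eqxx.
Qed.
End Part2.

Lemma size_le_sumn (a : seq nat) : all (fun x => 0 < x)%N a -> (size a <= sumn a)%N.
Proof.
elim: a => //= x a IH /andP[x0 /IH H].
by rewrite -add1n leq_add.
Qed.

Lemma mem_le_sumn (a : seq nat) x : x \in a -> (x <= sumn a)%N.
Proof.
elim: a => //= y a IH; rewrite in_cons => /orP[/eqP->|/IH H].
  exact: leq_addr.
exact: leq_trans H (leq_addl _ _).
Qed.

Lemma sum_comp (m : nat) (F : seq nat -> nat) (a : seq nat) :
  sum_compositions m (fun b => F b * (b == a))%N = if is_composition m a then F a else 0%N.
Proof.
rewrite /sum_compositions.
transitivity (\sum_(k < m.+1) \sum_(t : k.-tuple 'I_m.+1)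
   ((if is_composition m a then F a else 0) * (map val t == a)))%N.
  apply: eq_bigr => k _; rewrite big_mkcond /=; apply: eq_bigr => t _.
  case: eqP => [->|_]; last by rewrite !muln0; case: ifP.
  by rewrite !muln1.
under eq_bigr do rewrite -big_distrr.
rewrite -big_distrr /=.
case: ifP => Hc; last by rewrite mul0n.
suff -> : (\sum_(k < m.+1) \sum_(t : k.-tuple 'I_m.+1) (map val t == a : nat))%N = 1%N.
  by rewrite muln1.
move: Hc => /andP[Hpos /eqP Hsum].
have Hsz : (size a < m.+1)%N by rewrite ltnS -Hsum size_le_sumn.
have Hall : forall x, x \in a -> (x < m.+1)%N by move=> x xa; rewrite ltnS -Hsum mem_le_sumn.
rewrite (bigD1 (Ordinal Hsz)) //= [X in _ + X]big1 ?addn0; last first.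
  move=> k /eqP kn; apply: big1 => t; case: eqP => // Ht; exfalso; apply: kn.
  by apply: val_inj => /=; rewrite -Ht size_map size_tuple.
have Hs : size (map (@inord m) a) == size a by rewrite size_map.
pose t0 : (size a).-tuple 'I_m.+1 := Tuple Hs.
have Ht0 : map val t0 = a.
  rewrite /= -map_comp -[RHS]map_id; apply/eq_in_map => x xa /=.
  by rewrite inordK // Hall.
rewrite (bigD1 t0) //= [X in _ + X]big1 ?addn0.
  by rewrite Ht0 eqxx.
move=> t tt0; case: eqP => // Ht; exfalso; move/eqP: tt0; apply.
by apply: val_inj; apply: (inj_map val_inj); rewrite Ht Ht0.
Qed.

Import Order.TTheory GRing.Theory Num.Theory.

Section Poly.
Variables (R : realFieldType) (V : finType) (f : V -> nat).
Local Open Scope ring_scope.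

Definition Mx (J : {set V}) : nat := (\max_(i in J) f i)%N.
Definition Amax (J : {set V}) : {set V} := [set i in J | f i == Mx J].
Definition phi (x : {ffun V -> R}) : R := \sum_v (f v)%:R * x v.
Definition bary (J : {set V}) : {ffun V -> R} :=
  [ffun v => if v \in Amax J then (#|Amax J|%:R)^-1 else 0].

Lemma f_le_Mx (J : {set V}) i : i \in J -> (f i <= Mx J)%N.
Proof. by move=> Ji; apply: leq_bigmax_cond. Qed.

Lemma Amax_gt0 (J : {set V}) : J != set0 -> (0 < #|Amax J|)%N.
Proof.
rewrite -card_gt0 => /(eq_bigmax_cond f) [i0 Ji0 Hm].
rewrite card_gt0; apply/set0Pn; exists i0; rewrite inE Ji0 /Mx Hm eqxx.
by [].
Qed.

Lemma phi_evec u : phi (evec R u) = (f u)%:R.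
Proof.
rewrite /phi (bigD1 u) //= big1 ?addr0 => [|v vu]; rewrite ffunE.
  by rewrite eqxx mulr1.
by rewrite (negbTE vu) mulr0.
Qed.

Lemma conv_evec (J : {set V}) u : u \in J -> conv_simplex J (evec R u).
Proof.
move=> Ju; exists (fun i => if i == u then 1 else 0); split.
  by move=> i _; case: (i == u).
split.
  by rewrite (bigD1 u) //= eqxx big1 ?addr0 // => i /andP[_ /negbTE ->].
move=> j; rewrite (bigD1 u) //= eqxx mul1r big1 ?addr0 //.
by move=> i /andP[_ /negbTE ->]; rewrite mul0r.
Qed.

Lemma phi_conv (J : {set V}) x : conv_simplex J x -> exists t : V -> R,
  (forall i, i \in J -> 0 <= t i) /\ \sum_(i in J) t i = 1 /\
  (forall j, x j = \sum_(i in J) t i * evec R i j) /\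
  phi x = \sum_(i in J) t i * (f i)%:R.
Proof.
case=> t [t0 [t1 tx]]; exists t; do 3!split => //.
rewrite /phi.
under eq_bigr do rewrite tx big_distrr /=.
rewrite exchange_big /=; apply: eq_bigr => i Ji.
rewrite (bigD1 i) //= big1 ?addr0 => [|v vi]; rewrite ffunE.
  by rewrite eqxx mulr1 mulrC.
by rewrite (negbTE vi) !mulr0.
Qed.

Lemma phi_conv_le (J : {set V}) x : conv_simplex J x -> phi x <= (Mx J)%:R.
Proof.
case/phi_conv => t [t0 [t1 [_ ->]]].
have -> : (Mx J)%:R = \sum_(i in J) t i * (Mx J)%:R :> R.
  by rewrite -big_distrl /= t1 mul1r.
apply: ler_sum => i Ji; apply: ler_wpM2l; first exact: t0.
by rewrite ler_nat f_le_Mx.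
Qed.

Lemma conv_bary (J : {set V}) : J != set0 -> conv_simplex J (bary J).
Proof.
move=> J0; have A0 := Amax_gt0 J0.
have AJ : forall i, i \in Amax J -> i \in J by move=> i; rewrite inE => /andP[].
exists (fun i => if i \in Amax J then (#|Amax J|%:R)^-1 else 0); split.
  by move=> i _; case: ifP => // _; rewrite invr_ge0 ler0n.
split.
  rewrite -big_mkcondr /=.
  rewrite (eq_bigl (fun i => i \in Amax J)); last first.
    by move=> i; apply/andP/idP => [[]|Ai] //; split => //; apply: AJ.
  by rewrite sumr_const -(mulr_natr (_^-1)) mulVr // unitfE pnatr_eq0 -lt0n.
move=> j; rewrite ffunE.
case: (boolP (j \in J)) => Jj.
  rewrite (bigD1 j) //= ffunE eqxx mulr1 big1 ?addr0 // => i /andP[_ ij].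
  by rewrite ffunE eq_sym (negbTE ij) mulr0.
rewrite big1 //; first by case: ifP => // /AJ; rewrite (negbTE Jj).
move=> i Ji; rewrite ffunE; case: (j =P i) => [ji|_]; last by rewrite mulr0.
by rewrite ji Ji in Jj.
Qed.

Lemma phi_bary (J : {set V}) : J != set0 -> phi (bary J) = (Mx J)%:R.
Proof.
move=> J0; have A0 := Amax_gt0 J0.
rewrite /phi (bigID (fun v => v \in Amax J)) /= [X in _ + X]big1 ?addr0; last first.
  by move=> v /negbTE vA; rewrite ffunE vA mulr0.
rewrite (eq_bigr (fun _ => (Mx J)%:R * (#|Amax J|%:R)^-1)); last first.
  by move=> v vA; rewrite ffunE vA; move: vA; rewrite inE => /andP[_ /eqP->].
by rewrite sumr_const -(mulr_natr (_ * _)) -mulrA mulVr ?mulr1 // unitfE pnatr_eq0 -lt0n.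
Qed.

Lemma phi_conv_eq (J : {set V}) x : conv_simplex J x -> phi x = (Mx J)%:R ->
  #|Amax J| = 1%N -> x = bary J.
Proof.
case/phi_conv => t [t0 [t1 [tx ->]]] Heq /eqP/cards1P [a Aa].
have aA : a \in Amax J by rewrite Aa set11.
have Ja : a \in J by move: aA; rewrite inE => /andP[].
have H0 : \sum_(i in J) t i * ((Mx J)%:R - (f i)%:R) = 0.
  under eq_bigr do rewrite mulrBr.
  by rewrite sumrB -big_distrl /= t1 mul1r Heq subrr.
have Hz : forall i, i \in J -> t i * ((Mx J)%:R - (f i)%:R) = 0.
  apply: psumr_eq0P H0 => i Ji; apply: mulr_ge0; first exact: t0.
  by rewrite subr_ge0 ler_nat f_le_Mx.
have tz : forall i, i \in J -> i != a -> t i = 0.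
  move=> i Ji ia; move: (Hz i Ji) => /eqP; rewrite mulf_eq0 => /orP[/eqP //|].
  rewrite subr_eq0 eqr_nat => /eqP fi; move: ia; rewrite -in_set1 -Aa inE Ji /=.
  by rewrite fi eqxx.
have ta : t a = 1.
  by rewrite -t1 (bigD1 a) //= big1 ?addr0 // => i /andP[Ji ia]; rewrite tz.
apply/ffunP => j; rewrite tx !ffunE Aa cards1 invr1 in_set1.
rewrite (bigD1 a) //= big1 ?addr0 => [|i /andP[Ji ia]]; last by rewrite tz ?mul0r.
by rewrite ta mul1r ffunE.
Qed.

Lemma phi_sum (B : {set {set V}}) (y : {set V} -> {ffun V -> R}) :
  phi [ffun v => \sum_(I in B) y I v] = \sum_(I in B) phi (y I).
Proof.
rewrite /phi; under eq_bigr do rewrite ffunE big_distrr.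
by rewrite exchange_big.
Qed.

Lemma mink_sum (B : {set {set V}}) (Q : {set V} -> {ffun V -> R} -> Prop) x :
  minkowski_sum B Q x -> exists y, (forall I, I \in B -> Q I (y I)) /\
    x = [ffun v => \sum_(I in B) y I v].
Proof. by case=> y [Hy Hx]; exists y; split => //; apply/ffunP => v; rewrite ffunE Hx. Qed.

Lemma mink_pt (B : {set {set V}}) (Q : {set V} -> {ffun V -> R} -> Prop) y :
  (forall I, I \in B -> Q I (y I)) -> minkowski_sum B Q [ffun v => \sum_(I in B) y I v].
Proof. by move=> Hy; exists y; split => // v; rewrite ffunE. Qed.

Lemma generic_iff (B : {set {set V}}) : (forall I, I \in B -> I != set0) ->
  generic (minkowski_sum B (@conv_simplex R V)) f <->
  (forall I, I \in B -> #|Amax I| = 1%N).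
Proof.
move=> B0.
set Q := minkowski_sum B (@conv_simplex R V).
change (generic Q f) with (exists x, Q x /\ (forall y, Q y -> phi y <= phi x) /\
   (forall y, Q y -> phi y = phi x -> y = x)).
have Hle : forall x, Q x -> phi x <= \sum_(I in B) (Mx I)%:R.
  move=> x /mink_sum [y [Hy ->]]; rewrite phi_sum; apply: ler_sum => I BI.
  exact: phi_conv_le (Hy I BI).
split.
- case=> x0 [Qx0 [Hmax Huniq]] I BI.
  have [a aA] : exists a, a \in Amax I by apply/set0Pn; rewrite -card_gt0 Amax_gt0 // B0.
  pose z c := [ffun v => \sum_(J in B) (if J == I then evec R c else bary J) v].
  have Qz : forall c, c \in Amax I -> Q (z c).
    move=> c cA; apply: mink_pt => J BJ; case: eqP => [->|_].
      by apply: conv_evec; move: cA; rewrite inE => /andP[].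
    exact: conv_bary (B0 J BJ).
  have phiz : forall c, c \in Amax I -> phi (z c) = \sum_(J in B) (Mx J)%:R.
    move=> c cA; rewrite phi_sum; apply: eq_bigr => J BJ; case: eqP => [->|_].
      by rewrite phi_evec; move: cA; rewrite inE => /andP[_ /eqP ->].
    exact: phi_bary (B0 J BJ).
  have zx : forall c, c \in Amax I -> z c = x0.
    move=> c cA; apply: Huniq; first exact: Qz.
    apply/eqP; rewrite eq_le Hmax /=; last exact: Qz.
    by rewrite (phiz c cA); apply: Hle.
  apply/eqP/cards1P; exists a; apply/setP => u; rewrite in_set1.
  apply/idP/eqP => [uA|->//].
  have := congr1 (fun x : {ffun V -> R} => x a) (etrans (zx a aA) (esym (zx u uA))).
  rewrite /z /= !ffunE (bigD1 I BI) /= eqxx.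
  rewrite [X in _ + X = _ -> _](eq_bigr (fun J => bary J a)); last first.
    by move=> J /andP[_ /negbTE ->].
  rewrite (bigD1 I BI) /= eqxx.
  rewrite [X in _ = _ + X -> _](eq_bigr (fun J => bary J a)); last first.
    by move=> J /andP[_ /negbTE ->].
  move/addIr; rewrite !ffunE eqxx; case: (a =P u) => // _ /eqP.
  by rewrite oner_eq0.
- move=> H1; exists [ffun v => \sum_(I in B) bary I v].
  have phix : phi [ffun v => \sum_(I in B) bary I v] = \sum_(I in B) (Mx I)%:R.
    by rewrite phi_sum; apply: eq_bigr => I BI; apply: phi_bary; apply: B0.
  split; first by apply: mink_pt => I BI; apply: conv_bary; apply: B0.
  split; first by move=> y /Hle; rewrite phix.
  move=> y /mink_sum [yy [Hy ->]] Heq; apply/ffunP => v; rewrite !ffunE.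
  apply: eq_bigr => I BI.
  suff -> : yy I = bary I by [].
  apply: phi_conv_eq (Hy I BI) _ (H1 I BI).
  have Hs : \sum_(J in B) ((Mx J)%:R - phi (yy J)) = 0.
    by rewrite sumrB -phix -phi_sum Heq subrr.
  have Hz : forall J, J \in B -> (Mx J)%:R - phi (yy J) = 0.
    move=> J BJ; apply: (psumr_eq0P _ Hs) => // K BK.
    by rewrite subr_ge0; apply: phi_conv_le; apply: Hy.
  by apply/eqP; rewrite eq_sym -subr_eq0; apply/eqP; apply: Hz.
Qed.
End Poly.

Section Graph.
Variables (V : finType) (G : rel V) (Gsym : symmetric G).

Definition erel (I : {set V}) := [rel a b | [&& a \in I, b \in I & G a b]].

Lemma path_erel_in (I : {set V}) u p : path (erel I) u p -> all (mem I) p.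
Proof.
elim: p u => //= x p IH u /andP[/and3P[_ xI _] /IH ->]; by rewrite andbT.
Qed.

Lemma path_erel_G (I : {set V}) u p : path (erel I) u p -> path G u p.
Proof. by apply: sub_path => a b /and3P[]. Qed.

Lemma Amax_uniq (f : V -> nat) (I : {set V}) :
  I != set0 -> (forall u w, u \in Amax f I -> w \in Amax f I -> u = w) ->
  #|Amax f I| = 1%N.
Proof.
move=> I0 H; have := Amax_gt0 f I0; rewrite card_gt0 => /set0Pn [a aA].
apply/eqP/cards1P; exists a; apply/setP => u; rewrite in_set1.
by apply/idP/eqP => [uA|->//]; apply: H.
Qed.

Lemma uniqmax_ordered (f : V -> nat) :
  (forall I, I \in building_set G -> #|Amax f I| = 1%N) <-> ordered_coloring G f.
Proof.
split.
- move=> H u w uw fuw [p /and3P[Hp Hu Hall]].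
  pose I := [set x in u :: rcons p w].
  have uI : u \in I by rewrite inE mem_head.
  have wI : w \in I by rewrite inE in_cons mem_rcons mem_head orbT.
  have IB : I \in building_set G.
    rewrite inE; apply/andP; split; first by apply/set0Pn; exists u.
    have Hc : forall x, x \in I -> connect (erel I) u x.
      move=> x xI; apply: (path_connect (p := rcons p w)); last by move: xI; rewrite inE.
      apply: (@sub_in_path _ (mem I) G) => //.
        by move=> a b aI bI Gab; rewrite /= aI bI.
      by apply/allP => y yI; change (y \in I); rewrite inE.
    apply/forallP => x; apply/implyP => xI; apply/forallP => y; apply/implyP => yI.
    apply: connect_trans (Hc y yI).
    rewrite (sym_connect_sym _) ?Hc // => a b /=.
    by rewrite Gsym andbCA.
  have MI : Mx f I = f u.
    apply/eqP; rewrite eqn_leq f_le_Mx // andbT; apply/bigmax_leqP => x.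
    rewrite inE in_cons mem_rcons in_cons => /or3P[/eqP->//|/eqP->|xp].
      by rewrite fuw.
    by apply: ltnW; move/allP: Hall => /(_ x xp).
  have uA : u \in Amax f I by rewrite inE uI MI eqxx.
  have wA : w \in Amax f I by rewrite inE wI MI fuw eqxx.
  move/eqP: (H I IB) => /cards1P [a Aa].
  by move: uA wA uw; rewrite Aa !in_set1 => /eqP-> /eqP->; rewrite eqxx.
- move=> Hord I IB; have := IB; rewrite inE => /andP[I0 Ic].
  apply: Amax_uniq => // u w uA wA; apply/eqP; apply/negPn/negP => uw.
  have uI : u \in I by move: uA; rewrite inE => /andP[].
  have wI : w \in I by move: wA; rewrite inE => /andP[].
  have fu : f u = Mx f I by move: uA; rewrite inE => /andP[_ /eqP].
  have fw : f w = Mx f I by move: wA; rewrite inE => /andP[_ /eqP].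
  move/forallP: Ic => /(_ u); rewrite uI /= => /forallP /(_ w); rewrite wI /=.
  move=> /connectP [p Hp wl]; move: wl.
  case: (shortenP Hp) => p' Hp' Hu' _ wl.
  have pI := path_erel_in Hp'.
  have HG := path_erel_G Hp'.
  have wp' : w \in p'.
    have := mem_last u p'; rewrite -wl in_cons => /orP[/eqP wu|//].
    by rewrite wu eqxx in uw.
  have hp : has (fun x => f x == f u) p' by apply/hasP; exists w => //; rewrite fu fw.
  move: HG Hu' pI; case: (split_find hp) => x s1 s2 fx nhas HG Hu' pI.
  apply: (Hord u x); last exists s1.
  - apply/eqP => ux; move: Hu'; rewrite /= ux mem_cat mem_rcons mem_head /=.
    by [].
  - by apply/eqP; rewrite eq_sym.
  apply/and3P; split.
  - by move: HG; rewrite cat_path => /andP[].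
  - by move: Hu'; rewrite -cat_cons cat_uniq => /and3P[].
  apply/allP => y ys1.
  have yI : y \in I by move/allP: pI => /(_ y); rewrite mem_cat mem_rcons in_cons ys1 orbT; apply.
  rewrite ltn_neqAle fu f_le_Mx // andbT -fu.
  by move/hasPn: nhas => /(_ y ys1).
Qed.
End Graph.


Lemma sum_comp' (m : nat) (H F : seq nat -> nat) (a : seq nat) :
  (forall b, H b = F b * (b == a))%N ->
  sum_compositions m H = if is_composition m a then F a else 0%N.
Proof.
move=> EH; rewrite -(sum_comp m F a) /sum_compositions.
by apply: eq_bigr => k _; apply: eq_bigr => t _; rewrite EH.
Qed.

Theorem mainTheorem9 (R : realFieldType) (V : finType) (G : rel V)
    (Gsym : symmetric G) (Girr : irreflexive G) :
  (forall (n : nat) (e : {ffun 'I_n -> nat}),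
      @F_poly_coef R V (@graph_associahedron R V G) n e = @F_graph_coef V G n e)
  /\
  (forall (n : nat) (e : {ffun 'I_n -> nat}),
      @F_graph_coef V G n e =
      sum_compositions #|V| (fun alpha => zeta G alpha * @M_coef alpha n e)).
Proof.
split.
- move=> n e; rewrite /F_poly_coef /F_graph_coef /qs_coef.
  apply: eq_card => g; rewrite !inE; congr (_ && _); apply: asb_iff.
  apply: (iff_trans (@generic_iff R V _ (building_set G) _) (uniqmax_ordered Gsym _)).
  by move=> I; rewrite inE => /andP[].
- move=> n e; rewrite /F_graph_coef /qs_coef zeta_eq.
  rewrite (@sum_comp' _ _ (zeta G) (alpha_of e)); last first.
    by move=> b; rewrite /M_coef /alpha_of eq_sym; case: eqP.
  case: ifP => // Hc; apply: zeta0; move: Hc; rewrite /is_composition.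
  have -> : all (fun a => 0 < a)%N (alpha_of e).
    rewrite /alpha_of all_map; apply/allP => i; rewrite mem_filter => /andP[/= ? _].
    by rewrite lt0n.
  by move=> /negbT.
Qed.
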